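(* Let $f:[0,1]\to[0,1]$ be a continuous map such that $f$ is increasing on $[0,1/2]$ and decreasing on $[1/2,1]$. Suppose $f$ has a periodic orbit of least period $\ge 2$. Then the periodic orbits of $f$ of least periods $\ge 2$ are nested in the following sense: if $P$ and $Q$ are periodic orbits of $f$ of least periods $\ge 2$ with $\max P<\max Q$, then $[\min P,\max P]\subset[\min Q,\max Q]$.
   Context: For $n\ge1$, $f^n$ denotes the $n$-th iterate of $f$. A point $x_0$ is a periodic point of least period $k$ if $f^k(x_0)=x_0$ and $f^i(x_0)\neq x_0$ for $0<i<k$; its orbit $\{x_0,f(x_0),f^2(x_0),\dots\}$ is then a periodic orbit of least period $k$. *)

(* Defs.v *)
From Stdlib Require Import Reals Lra Lia.
Open Scope R_scope.

Definition iter (f : R -> R) (n : nat) (x : R) : R := Nat.iter n f x.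

Definition maps01 (f : R -> R) : Prop :=
  forall x, 0 <= x <= 1 -> 0 <= f x <= 1.

Definition continuous_on01 (f : R -> R) : Prop :=
  forall x, 0 <= x <= 1 -> forall eps, 0 < eps -> exists delta, 0 < delta /\
    forall y, 0 <= y <= 1 -> Rabs (y - x) < delta -> Rabs (f y - f x) < eps.

Definition increasing_on (f : R -> R) (a b : R) : Prop :=
  forall x y, a <= x <= b -> a <= y <= b -> x < y -> f x < f y.

Definition decreasing_on (f : R -> R) (a b : R) : Prop :=
  forall x y, a <= x <= b -> a <= y <= b -> x < y -> f y < f x.

Definition least_period (f : R -> R) (x0 : R) (k : nat) : Prop :=
  (1 <= k)%nat /\ iter f k x0 = x0 /\
  forall i, (0 < i < k)%nat -> iter f i x0 <> x0.

Definition orbit (f : R -> R) (x0 : R) : R -> Prop :=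
  fun y => exists n : nat, y = iter f n x0.

Definition is_min_of (S : R -> Prop) (m : R) : Prop :=
  S m /\ forall y, S y -> m <= y.

Definition is_max_of (S : R -> Prop) (M : R) : Prop :=
  S M /\ forall y, S y -> y <= M.

(* Main.v *)
Require Import Defs.
From Stdlib Require Import Reals Lra Lia.
Open Scope R_scope.

Lemma iter_S f n x : iter f (S n) x = f (iter f n x).
Proof. reflexivity. Qed.

Lemma iter_add f a b x : iter f (a + b) x = iter f a (iter f b x).
Proof. induction a as [|a IHa]; [reflexivity|]. change (f (iter f (a + b) x) = f (iter f a (iter f b x))). rewrite IHa; reflexivity. Qed.

Lemma iter_mul f k x a : iter f k x = x -> iter f (a * k) x = x.
Proof.
  intros H; induction a; [reflexivity|].
  replace (S a * k)%nat with (k + a * k)%nat by lia.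
  rewrite iter_add, IHa; exact H.
Qed.

Lemma iter_fix f m j : f m = m -> iter f j m = m.
Proof. intros H; induction j; [reflexivity|]. rewrite iter_S, IHj; exact H. Qed.

Lemma iter_range f n x : maps01 f -> 0 <= x <= 1 -> 0 <= iter f n x <= 1.
Proof. intros Hm Hx; induction n; [exact Hx|]. rewrite iter_S; apply Hm; exact IHn. Qed.

Lemma key f p k m M :
  maps01 f -> increasing_on f 0 (1/2) -> decreasing_on f (1/2) 1 ->
  0 <= p <= 1 -> least_period f p k -> (2 <= k)%nat ->
  is_min_of (orbit f p) m -> is_max_of (orbit f p) M ->
  f M = m /\ 1/2 < M /\ 0 <= M <= 1.
Proof.
  intros hmap hinc hdec Hp [Hk1 [Hkp Hlt]] Hk2 [[n Hn] Hmin] [[nM HnM] Hmax].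
  assert (HM01 : 0 <= M <= 1) by (rewrite HnM; apply iter_range; auto).
  assert (Hm01 : 0 <= m <= 1) by (rewrite Hn; apply iter_range; auto).
  set (y := iter f (n + (k - 1)) p).
  assert (Hy : f y = m).
  { unfold y; rewrite <- iter_S.
    replace (S (n + (k - 1))) with (n + k)%nat by lia.
    rewrite iter_add, Hkp; auto. }
  assert (Hy01 : 0 <= y <= 1) by (unfold y; apply iter_range; auto).
  assert (Hyo : orbit f p y) by (exists (n + (k-1))%nat; reflexivity).
  assert (HmY : m <= y) by (apply Hmin; auto).
  assert (HyM : y <= M) by (apply Hmax; auto).
  assert (HfM : m <= f M).
  { apply Hmin. exists (S nM). rewrite iter_S, HnM. reflexivity. }
  assert (Hfm : m <= f m).
  { apply Hmin. exists (S n). rewrite iter_S, Hn. reflexivity. }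
  assert (Hnf : f m <> m).
  { intros Hf.
    assert (H1 : iter f (n * k) p = p) by (apply iter_mul; auto).
    replace (n * k)%nat with ((n * k - n) + n)%nat in H1 by nia.
    rewrite iter_add, <- Hn, iter_fix in H1 by exact Hf.
    apply (Hlt 1%nat); [lia|]. rewrite <- H1. exact Hf. }
  destruct (Rle_lt_dec y (1/2)) as [Hyc|Hyc].
  - destruct (Rle_lt_or_eq_dec m y HmY) as [Hl|He].
    + assert (f m < f y) by (apply hinc; lra). lra.
    + exfalso; apply Hnf. rewrite He at 1. rewrite Hy. reflexivity.
  - destruct (Rle_lt_or_eq_dec y M HyM) as [Hl|He].
    + assert (f M < f y) by (apply hdec; lra). lra.
    + subst y. rewrite <- He. split; [exact Hy|]. split; lra.
Qed.

Theorem proposition1 (f : R -> R)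
  (hmap : maps01 f)
  (hcont : continuous_on01 f)
  (hinc : increasing_on f 0 (1/2))
  (hdec : decreasing_on f (1/2) 1)
  (hex : exists z k, 0 <= z <= 1 /\ least_period f z k /\ (2 <= k)%nat) :
  forall (p q : R) (k l : nat) (minP maxP minQ maxQ : R),
    0 <= p <= 1 -> least_period f p k -> (2 <= k)%nat ->
    0 <= q <= 1 -> least_period f q l -> (2 <= l)%nat ->
    is_min_of (orbit f p) minP -> is_max_of (orbit f p) maxP ->
    is_min_of (orbit f q) minQ -> is_max_of (orbit f q) maxQ ->
    maxP < maxQ ->
    forall x, minP <= x <= maxP -> minQ <= x <= maxQ.
Proof.
  intros p q k l minP maxP minQ maxQ Hp Hpk Hk Hq Hql Hl HmP HMP HmQ HMQ Hlt x Hx.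
  destruct (key f p k minP maxP hmap hinc hdec Hp Hpk Hk HmP HMP) as [E1 [C1 D1]].
  destruct (key f q l minQ maxQ hmap hinc hdec Hq Hql Hl HmQ HMQ) as [E2 [C2 D2]].
  assert (f maxQ < f maxP) by (apply hdec; lra). lra.
Qed.
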